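(* Let $G$ be a group and let $n$ be the cardinality of the set of path-components of $|L(G)|$. Then $H_1(|\mathcal{C}(G)|;\mathbb{Z})$ has rank at least $n-1$ (infinite rank if $n$ is infinite). In particular, if $|L(G)|$ is disconnected then $|\mathcal{C}(G)|$ is not simply connected.
   Context: For a group $G$, the coset poset $\mathcal{C}(G)$ is the set of left cosets of all proper subgroups of $G$ (including the trivial subgroup), ordered by inclusion; $L(G)$ is the poset of proper nontrivial subgroups of $G$ ordered by inclusion; $|P|$ denotes the geometric realization of the order complex (chains) of $P$. *)

(* Defs.v *)
From HB Require Import structures.
From mathcomp Require Import all_boot all_algebra.
From mathcomp Require Import boolp classical_sets.
Set Implicit Arguments. Unset Strict Implicit. Unset Printing Implicit Defensive.
Import GRing.Theory.
Local Open Scope classical_set_scope.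
Local Open Scope ring_scope.

Definition group_axioms (T : Type) (mul : T -> T -> T) (one : T) (inv : T -> T) : Prop :=
  [/\ (forall x y z, mul x (mul y z) = mul (mul x y) z),
      (forall x, mul one x = x) &
      (forall x, mul (inv x) x = one)].

Definition is_subgroup (T : Type) (mul : T -> T -> T) (one : T) (inv : T -> T)
  (H : set T) : Prop :=
  [/\ H one, (forall x y, H x -> H y -> H (mul x y)) & (forall x, H x -> H (inv x))].

Definition proper_subgroup T mul one inv (H : set T) : Prop :=
  @is_subgroup T mul one inv H /\ H <> [set: T].

Definition L_vertex T mul one inv (H : set T) : Prop :=
  @proper_subgroup T mul one inv H /\ H <> [set one].

Definition lcoset T (mul : T -> T -> T) (g : T) (H : set T) : set T := mul g @` H.

Definition C_vertex T mul one inv (C : set T) : Prop :=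
  exists g H, @proper_subgroup T mul one inv H /\ C = lcoset mul g H.

(* strict inclusion, the order of both posets *)
Definition slt T (A B : set T) : Prop := A `<=` B /\ A <> B.

(* ---------- path components of |P| for a poset (V, <=) ----------
   Two points of the realization of the order complex lie in the same path
   component iff their vertices are joined by a zigzag of comparable elements. *)
Definition comparable T (V : set (set T)) (A B : set T) : Prop :=
  V A /\ V B /\ (A `<=` B \/ B `<=` A).

Inductive zigzag T (V : set (set T)) : set T -> set T -> Prop :=
| zz_refl A : V A -> zigzag V A A
| zz_step A B C : comparable V A B -> zigzag V B C -> zigzag V A C.

(* ---------- simplicial homology H_1(|P|; Z) of the order complex ----------
   Simplices of the order complex are chains; we orient them by the order.
   Finitely supported integer chains are represented as formal sums (lists). *)
Definition chain1 T := seq (int * (set T * set T)).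
Definition chain2 T := seq (int * (set T * set T * set T)).

Definition edge T (V : set (set T)) (e : set T * set T) : Prop :=
  V e.1 /\ V e.2 /\ slt e.1 e.2.
Definition triangle T (V : set (set T)) (t : set T * set T * set T) : Prop :=
  V t.1.1 /\ V t.1.2 /\ V t.2 /\ slt t.1.1 t.1.2 /\ slt t.1.2 t.2.

Definition valid1 T V (c : chain1 T) : Prop := forall x, x \in c -> edge V x.2.
Definition valid2 T V (c : chain2 T) : Prop := forall x, x \in c -> triangle V x.2.

Definition coef1 T (c : chain1 T) (e : set T * set T) : int :=
  \sum_(x <- c) (if asbool (x.2 = e) then x.1 else 0).

Definition ind T (a b : set T) : int := if asbool (a = b) then 1 else 0.

Definition bd1 T (c : chain1 T) (v : set T) : int :=
  \sum_(x <- c) x.1 * (ind x.2.2 v - ind x.2.1 v).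

Definition bd2 T (w : chain2 T) : chain1 T :=
  flatten [seq [:: (x.1, (x.2.1.2, x.2.2)); (- x.1, (x.2.1.1, x.2.2));
                  (x.1, (x.2.1.1, x.2.1.2))] | x <- w].

Definition cycle1 T V (z : chain1 T) : Prop := @valid1 T V z /\ forall v, bd1 z v = 0.

Definition scale1 T (k : int) (c : chain1 T) : chain1 T := [seq (k * x.1, x.2) | x <- c].

Definition comb1 T (m : nat) (a : 'I_m -> int) (z : 'I_m -> chain1 T) : chain1 T :=
  flatten [seq scale1 (a i) (z i) | i <- enum 'I_m].

(* z is a boundary (as a finitely supported function on edges) *)
Definition is_boundary1 T V (z : chain1 T) : Prop :=
  exists w : chain2 T, @valid2 T V w /\ forall e, coef1 z e = coef1 (bd2 w) e.

(* rank H_1(|P|; Z) >= m : there are m cycles whose classes are Z-linearly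
   independent in H_1 = Z_1 / B_1 *)
Definition H1_rank_ge T (V : set (set T)) (m : nat) : Prop :=
  exists z : 'I_m -> chain1 T,
    (forall i, cycle1 V (z i)) /\
    forall a : 'I_m -> int, is_boundary1 V (comb1 a z) -> forall i, a i = 0.

(* Main.v *)
Require Import Defs.
From mathcomp Require Import all_boot all_algebra.
From mathcomp Require Import boolp classical_sets.
From mathcomp Require Import ring.
Set Implicit Arguments. Unset Strict Implicit. Unset Printing Implicit Defensive.
Import GRing.Theory.
Local Open Scope classical_set_scope.
Local Open Scope ring_scope.

Lemma asbool_eqE (E : eqType) (a b : E) : asbool (a = b) = (b == a).
Proof. by apply/asboolP/eqP => ->. Qed.

Definition pairing T (f : set T * set T -> int) (c : chain1 T) : int :=
  \sum_(x <- c) x.1 * f x.2.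

Lemma pairing_coef T (f : set T * set T -> int) (c : chain1 T) (s : seq (set T * set T)) :
  uniq s -> (forall x, x \in c -> x.2 \in s) ->
  pairing f c = \sum_(e <- s) Defs.coef1 c e * f e.
Proof.
move=> us cs; rewrite /pairing /Defs.coef1.
rewrite (eq_bigr (fun e => \sum_(x <- c) (if asbool (x.2 = e) then x.1 else 0) * f e)); last by move=> e _; rewrite mulr_suml.
rewrite exchange_big /=; apply: eq_big_seq => x xc.
rewrite (bigD1_seq x.2) /= ?cs // asbool_eqE eqxx big1_seq ?addr0 //.
move=> e /andP[ne _]; rewrite asbool_eqE.
by rewrite (negbTE ne) mul0r.
Qed.

Lemma pairing_eq T (f : set T * set T -> int) (c c' : chain1 T) :
  (forall e, Defs.coef1 c e = Defs.coef1 c' e) -> pairing f c = pairing f c'.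
Proof.
move=> h; set s := undup [seq x.2 | x <- c ++ c'].
have us : uniq s by apply: undup_uniq.
rewrite (@pairing_coef _ f c s) ?(@pairing_coef _ f c' s) //.
- by apply: eq_bigr => e _; rewrite h.
- by move=> x xc; rewrite mem_undup map_f // mem_cat xc orbT.
- by move=> x xc; rewrite mem_undup map_f // mem_cat xc.
Qed.

Lemma pairing_cat T f (c c' : chain1 T) : pairing f (c ++ c') = pairing f c + pairing f c'.
Proof. by rewrite /pairing big_cat. Qed.

Lemma pairing_scale T f k (c : chain1 T) : pairing f (scale1 k c) = k * pairing f c.
Proof.
rewrite /pairing /scale1 big_map big_distrr /=; apply: eq_bigr => x _; by rewrite mulrA.
Qed.

Lemma pairing_comb T f m (a : 'I_m -> int) (z : 'I_m -> chain1 T) :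
  pairing f (comb1 a z) = \sum_(i <- enum 'I_m) a i * pairing f (z i).
Proof.
rewrite /comb1; elim: (enum 'I_m) => [|i r IH]; first by rewrite big_nil /pairing big_nil.
by rewrite /= pairing_cat IH big_cons pairing_scale.
Qed.

Lemma mulgV T (mul : T -> T -> T) one inv : group_axioms mul one inv ->
  forall x, mul x (inv x) = one.
Proof.
case=> mA m1 mV x.
rewrite -[mul x (inv x)]m1 -{1}(mV (inv x)) -mA (mA (inv x)) mV m1 mV //.
Qed.

Lemma mulg1 T (mul : T -> T -> T) one inv : group_axioms mul one inv ->
  forall x, mul x one = x.
Proof.
move=> hG; case: (hG) => mA m1 mV x.
by rewrite -(mV x) mA (mulgV hG) m1.
Qed.

Lemma inv_uniq T (mul : T -> T -> T) one inv : group_axioms mul one inv ->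
  forall p q, mul p q = one -> q = inv p.
Proof.
move=> hG; case: (hG) => mA m1 mV p q e.
by rewrite -[q]m1 -(mV p) -mA e (mulg1 hG).
Qed.

Lemma mulg_lcancel T (mul : T -> T -> T) one inv : group_axioms mul one inv ->
  forall a b c, mul a b = mul a c -> b = c.
Proof.
move=> hG; case: (hG) => mA m1 mV a b c e.
by rewrite -[b]m1 -[c]m1 -(mV a) -!mA e.
Qed.

Lemma mulg_rcancel T (mul : T -> T -> T) one inv : group_axioms mul one inv ->
  forall a b c, mul b a = mul c a -> b = c.
Proof.
move=> hG; case: (hG) => mA m1 mV a b c e.
by rewrite -[b](mulg1 hG) -[c](mulg1 hG) -(mulgV hG a) !mA e.
Qed.

Lemma comparable_sym T (V : set (set T)) A B : Defs.comparable V A B -> Defs.comparable V B A.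
Proof. by case=> [VA [VB h]]; split=> //; split=> //; case: h; [right|left]. Qed.

Lemma zigzag_V1 T (V : set (set T)) A B : zigzag V A B -> V A.
Proof. by case=> // A' B' C [VA _]. Qed.

Lemma zigzag_trans T (V : set (set T)) A B C : zigzag V A B -> zigzag V B C -> zigzag V A C.
Proof.
elim=> // A' B' C' cAB _ IH h; apply: zz_step cAB (IH h).
Qed.

Lemma zigzag_sym T (V : set (set T)) A B : zigzag V A B -> zigzag V B A.
Proof.
elim=> [A' VA|A' B' C' cAB _ IH]; first exact: zz_refl.
have VA : V A' by case: cAB.
exact: (zigzag_trans IH (zz_step (comparable_sym cAB) (zz_refl VA))).
Qed.

Lemma zigzag_comp T (V : set (set T)) X B C : Defs.comparable V B C -> zigzag V X B -> zigzag V X C.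
Proof.
move=> cBC h; have VC : V C by case: cBC => _ [].
exact: (zigzag_trans h (zz_step cBC (zz_refl VC))).
Qed.

Lemma cvertex_ne T (mul : T -> T -> T) one inv : group_axioms mul one inv ->
  forall C, C_vertex mul one inv C -> exists g, C g.
Proof.
move=> hG C [g [K [[[K1 _ _] _] ->]]]; by exists (mul g one); exists one.
Qed.

Lemma cvertex_one T (mul : T -> T -> T) one inv : group_axioms mul one inv ->
  forall C, C_vertex mul one inv C -> C one -> proper_subgroup mul one inv C.
Proof.
move=> hG C [g [K [[[K1 KM KI] KT] ->]]] [k Kk gk].
have [mA m1 mV] := hG.
have gi : g = inv k.
  by rewrite -(mulg1 hG g) -(mulgV hG k) mA gk m1.
have Kg : K g by rewrite gi; apply: KI.
suff -> : lcoset mul g K = K by split.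
apply/seteqP; split=> x /=.
- by case=> y Ky <-; apply: KM.
- move=> Kx; exists (mul k x); first by apply: KM.
  by rewrite mA gk m1.
Qed.

Lemma lv_of T (mul : T -> T -> T) one inv : group_axioms mul one inv ->
  forall C, C_vertex mul one inv C -> C one -> C <> [set one] -> L_vertex mul one inv C.
Proof. by move=> hG C CV C1 Cn; split=> //; apply: (cvertex_one hG). Qed.

Definition cf T (mul : T -> T -> T) one inv (X : set T) (e : set T * set T) : int :=
  if asbool (e.1 = [set one] /\ zigzag (L_vertex mul one inv) X e.2) then 1 else 0.

Lemma cf_single T (mul : T -> T -> T) one inv X g B : g <> one ->
  cf mul one inv X ([set g], B) = 0.
Proof.
move=> gn; rewrite /cf asboolF //= => [[e _]]; apply: gn.
by have : [set g] g by []; rewrite e.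
Qed.

Lemma cocycle T (mul : T -> T -> T) one inv X : group_axioms mul one inv ->
  forall a b c, triangle (C_vertex mul one inv) (a, b, c) ->
  cf mul one inv X (b, c) = 0 /\ cf mul one inv X (a, c) = cf mul one inv X (a, b).
Proof.
move=> hG a b c [/= Va [Vb [Vc [[ab nab] [bc nbc]]]]].
have [g ag] := cvertex_ne hG Va.
have b1 : b <> [set one].
  move=> eb; apply: nab; rewrite eb; apply/seteqP; split=> x; first by rewrite -eb; apply: ab.
  move=> /= ->; have := ab _ ag; rewrite eb /= => gone; by rewrite -gone.
split; first by rewrite /cf asboolF //= => [[]].
rewrite /cf /=; case: (pselect (a = [set one])) => [ea|na]; last first.
  by rewrite !asboolF //; case.
have b1' : b one by apply: ab; rewrite ea.
have c1 : c one by apply: bc.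
have Lb := lv_of hG Vb b1' b1.
have c1n : c <> [set one].
  move=> ec; apply: b1; apply/seteqP; split=> x; first by rewrite -ec; apply: bc.
  by move=> /= ->.
have Lc := lv_of hG Vc c1 c1n.
have cbc : Defs.comparable (L_vertex mul one inv) b c by split=> //; split=> //; left.
have [zb|nzb] := pselect (zigzag (L_vertex mul one inv) X b).
  by rewrite !asboolT //; split=> //; apply: zigzag_comp cbc zb.
rewrite !asboolF //; case=> _ zc; apply: nzb => //.
exact: zigzag_comp (comparable_sym cbc) zc.
Qed.

Lemma pairing_bd2 T (mul : T -> T -> T) one inv X : group_axioms mul one inv ->
  forall w, valid2 (C_vertex mul one inv) w -> pairing (cf mul one inv X) (bd2 w) = 0.
Proof.
move=> hG; elim=> [|[k [[a b] c]] w IH] vw; first by rewrite /pairing big_nil.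
have -> : bd2 ((k, (a, b, c)) :: w) = [:: (k, (b, c)); (- k, (a, c)); (k, (a, b))] ++ bd2 w by [].
rewrite pairing_cat IH; last by move=> x xw; apply: vw; rewrite in_cons xw orbT.
have [e1 e2] := cocycle X hG (vw _ (mem_head _ _)).
by rewrite /pairing !big_cons big_nil /= e1 e2; ring.
Qed.

Lemma ntriv T (mul : T -> T -> T) one inv X : L_vertex mul one inv X -> exists x, X x /\ x <> one.
Proof.
move=> [[[X1 _ _] _] Xn]; apply: contrapT => nex; apply: Xn.
apply/seteqP; split=> x /=; last by move=> ->.
move=> Xx; apply: contrapT => xn; apply: nex; by exists x.
Qed.

Lemma mul_conj_aux T (mul : T -> T -> T) one inv : group_axioms mul one inv ->
  forall y t, mul (mul y (mul (mul (inv y) t) y)) (inv y) = t /\ mul y (mul (mul (inv y) t) y) = mul t y.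
Proof.
move=> hG y t; have [mA m1 mV] := hG.
have e : mul y (mul (mul (inv y) t) y) = mul t y.
  by rewrite mA mA (mulgV hG) m1.
by rewrite e -mA (mulgV hG) (mulg1 hG).
Qed.

Lemma conj_sub T (mul : T -> T -> T) one inv : group_axioms mul one inv ->
  forall H0 y, proper_subgroup mul one inv H0 ->
  proper_subgroup mul one inv [set x | H0 (mul (mul y x) (inv y))].
Proof.
move=> hG H0 y [[H1 HM HI] HT]; have [mA m1 mV] := hG.
have aux : forall p q, mul (mul p (inv y)) (mul y q) = mul p q.
  by move=> p q; rewrite mA -(mA p) mV (mulg1 hG).
split; [split|] => /=.
- by rewrite (mulg1 hG) (mulgV hG).
- move=> a b Ha Hb; have := HM _ _ Ha Hb.
  by rewrite mA aux mA.
- move=> a Ha; have -> : mul (mul y (inv a)) (inv y) = inv (mul (mul y a) (inv y)).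
    apply: (inv_uniq hG); rewrite mA aux -(mA y a) (mulgV hG) (mulg1 hG) (mulgV hG) //.
  by apply: HI.
- move=> KT; apply: HT; apply/seteqP; split=> t //= _.
  have : [set x | H0 (mul (mul y x) (inv y))] (mul (mul (inv y) t) y) by rewrite KT.
  by rewrite /= (proj1 (mul_conj_aux hG y t)).
Qed.

Lemma conj_mem T (mul : T -> T -> T) one inv : group_axioms mul one inv ->
  forall (H0 : set T) y h, H0 h ->
  lcoset mul y [set x | H0 (mul (mul y x) (inv y))] (mul h y).
Proof.
move=> hG H0 y h Hh; have [e1 e2] := mul_conj_aux hG y h.
by exists (mul (mul (inv y) h) y); rewrite /= ?e1.
Qed.

Lemma cv_lcoset T (mul : T -> T -> T) one inv g K :
  proper_subgroup mul one inv K -> C_vertex mul one inv (lcoset mul g K).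
Proof. by move=> pK; exists g, K. Qed.

Lemma cv_sub T (mul : T -> T -> T) one inv : group_axioms mul one inv ->
  forall K, L_vertex mul one inv K -> C_vertex mul one inv K.
Proof.
move=> hG K [pK _]; have [mA m1 mV] := hG; exists one, K; split=> //.
apply/seteqP; split=> x /=; first by move=> Kx; exists x => //; rewrite m1.
by case=> y Ky <-; rewrite m1.
Qed.

Lemma cv_single T (mul : T -> T -> T) one inv : group_axioms mul one inv ->
  forall t g, t <> one -> C_vertex mul one inv [set g].
Proof.
move=> hG t g tn; have [mA m1 mV] := hG.
exists g, [set one]; split.
  split; first split => //=.
  - by move=> a b -> ->; rewrite m1.
  - by move=> a ->; rewrite -{2}(mV one) (mulg1 hG).
  - by move=> e; apply: tn; have : [set: T] t by []; rewrite -e.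
apply/seteqP; split=> x /=; first by move=> ->; exists one => //; rewrite (mulg1 hG).
by case=> y -> <-; rewrite (mulg1 hG).
Qed.

Lemma edge_single T (mul : T -> T -> T) one inv : group_axioms mul one inv ->
  forall t g b B, t <> one -> C_vertex mul one inv B -> B g -> B b -> b <> g ->
  edge (C_vertex mul one inv) ([set g], B).
Proof.
move=> hG t g b B tn VB Bg Bb bg; split; first exact: (cv_single hG g tn).
split=> //; rewrite /slt /=; split; first by move=> x /= ->.
by move=> e; apply: bg; move: Bb; rewrite -e /=.
Qed.

Lemma valid1_cons T V (e : int * (set T * set T)) c : edge V e.2 -> valid1 V c -> valid1 V (e :: c).
Proof. by move=> he hc x; rewrite in_cons => /orP[/eqP ->|/hc]. Qed.

Lemma valid1_nil T V : valid1 V (@nil (int * (set T * set T))).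
Proof. by move=> x. Qed.

Lemma prod_ne T (mul : T -> T -> T) one inv : group_axioms mul one inv ->
  forall H0 Hj h y, L_vertex mul one inv H0 -> L_vertex mul one inv Hj ->
  ~ zigzag (L_vertex mul one inv) H0 Hj -> H0 h -> Hj y -> y <> one -> mul h y <> one.
Proof.
move=> hG H0 Hj h y L0 Lj nz Hh Hy yn e.
have yi : y = inv h := inv_uniq hG e.
have [[[H01 H0M H0I] H0T] _] := L0.
have [[[Hj1 HjM HjI] HjT] _] := Lj.
have H0y : H0 y by rewrite yi; apply: H0I.
have LK : L_vertex mul one inv (H0 `&` Hj).
  split; first split; first split.
  - by split.
  - by move=> a b [? ?] [? ?]; split; [apply: H0M|apply: HjM].
  - by move=> a [? ?]; split; [apply: H0I|apply: HjI].
  - move=> KT; apply: H0T; apply/seteqP; split=> x //= _.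
    have : (H0 `&` Hj) x by rewrite KT.
    by case.
  - move=> K1; apply: yn; have : (H0 `&` Hj) y by split.
    by rewrite K1.
apply: nz; apply: (zz_step (B := H0 `&` Hj)).
  by split=> //; split=> //; right=> x [].
apply: (zz_step (B := Hj)); first by split=> //; split=> //; left=> x [].
exact: zz_refl.
Qed.

Theorem mainTheorem12 (T : Type) (mul : T -> T -> T) (one : T) (inv : T -> T)
  (hG : group_axioms mul one inv) (k : nat) (H : 'I_k.+1 -> set T)
  (hL : forall i, L_vertex mul one inv (H i))
  (hdist : forall i j, i != j -> ~ zigzag (L_vertex mul one inv) (H i) (H j)) :
  H1_rank_ge (C_vertex mul one inv) k.
Proof.
have [mA m1 mV] := hG.
have [h [Hh hn]] := ntriv (hL ord0).
have [yf hyf] := choice (fun j : 'I_k => ntriv (hL (lift ord0 j))).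
pose Hj j := H (lift ord0 j).
pose V j := lcoset mul (yf j) [set x | H ord0 (mul (mul (yf j) x) (inv (yf j)))].
pose z j : chain1 T :=
  [:: (1%:Z, ([set one], H ord0)); (-1, ([set h], H ord0));
      (1%:Z, ([set h], lcoset mul h (Hj j))); (-1, ([set mul h (yf j)], lcoset mul h (Hj j)));
      (1%:Z, ([set mul h (yf j)], V j)); (-1, ([set yf j], V j));
      (1%:Z, ([set yf j], Hj j)); (-1, ([set one], Hj j))].
have H01 : H ord0 one by case: (hL ord0) => [[[]]].
have Hj1 j : Hj j one by case: (hL (lift ord0 j)) => [[[]]].
have Hjy j : Hj j (yf j) by case: (hyf j).
have yn j : yf j <> one by case: (hyf j).
have hyn j : mul h (yf j) <> one.
  apply: (prod_ne hG (hL ord0) (hL (lift ord0 j)) _ Hh (Hjy j) (yn j)).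
  by apply: hdist; rewrite neq_lift.
have hyh j : mul h (yf j) <> h.
  by move=> e; apply: (yn j); apply: (mulg_lcancel hG (a := h)); rewrite e (mulg1 hG).
have hyy j : mul h (yf j) <> yf j.
  by move=> e; apply: hn; apply: (mulg_rcancel hG (a := yf j)); rewrite e m1.
have pHj j : proper_subgroup mul one inv (Hj j) by case: (hL (lift ord0 j)).
have VC j : C_vertex mul one inv (V j).
  by apply: cv_lcoset; apply: (conj_sub hG); case: (hL ord0).
have Vhy j : V j (mul h (yf j)) by apply: (conj_mem hG).
have Vy j : V j (yf j).
  by have := conj_mem hG (yf j) H01; rewrite m1.
have hHj j : lcoset mul h (Hj j) h by exists one; rewrite ?(mulg1 hG).
have hyHj j : lcoset mul h (Hj j) (mul h (yf j)) by exists (yf j).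
have C0 := cv_sub hG (hL ord0).
have Cj j : C_vertex mul one inv (Hj j) := cv_sub hG (hL (lift ord0 j)).
have Chj j : C_vertex mul one inv (lcoset mul h (Hj j)) by apply: cv_lcoset.
exists z; split.
  move=> j; split.
    apply: valid1_cons; first by apply: (edge_single hG hn C0 H01 Hh).
    apply: valid1_cons; first by apply: (edge_single hG hn C0 Hh H01) => e; apply: hn.
    apply: valid1_cons; first by apply: (edge_single hG hn (Chj j) (hHj j) (hyHj j)).
    apply: valid1_cons; first by apply: (edge_single hG hn (Chj j) (hyHj j) (hHj j)) => e; apply: (hyh j).
    apply: valid1_cons; first by apply: (edge_single hG hn (VC j) (Vhy j) (Vy j)) => e; apply: (hyy j).
    apply: valid1_cons; first by apply: (edge_single hG hn (VC j) (Vy j) (Vhy j)).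
    apply: valid1_cons; first by apply: (edge_single hG hn (Cj j) (Hjy j) (Hj1 j)) => e; apply: (yn j).
    apply: valid1_cons; first by apply: (edge_single hG hn (Cj j) (Hj1 j) (Hjy j)).
    exact: valid1_nil.
  by move=> v; rewrite /bd1 !big_cons big_nil /=; ring.
move=> a [w [vw hw]] i.
pose f := cf mul one inv (H (lift ord0 i)).
have e1 := pairing_eq f hw.
rewrite (pairing_bd2 _ hG vw) pairing_comb in e1.
have pz j : pairing f (z j) = - (if j == i then 1 else 0).
  have cfs g B : g <> one -> f ([set g], B) = 0 by move=> gn; apply: cf_single.
  rewrite /pairing !big_cons big_nil /= !(cfs h _ hn) !(cfs _ _ (hyn j)) !(cfs _ _ (yn j)) /f.
  have -> : cf mul one inv (H (lift ord0 i)) ([set one], H ord0) = 0.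
    rewrite /cf asboolF //= => -[_ zz]; apply: (hdist (lift ord0 i) ord0) => //.
  have -> : cf mul one inv (H (lift ord0 i)) ([set one], Hj j) = if j == i then 1 else 0.
    rewrite /cf; case: (eqVneq j i) => [->|nij].
      by rewrite asboolT //; split=> //; apply: zz_refl.
    rewrite asboolF //= => -[_ zz]; apply: (hdist (lift ord0 i) (lift ord0 j)) => //.
    by rewrite (inj_eq (@lift_inj _ ord0)) eq_sym.
  ring.
have : \sum_(j <- enum 'I_k) a j * pairing f (z j) = - a i.
  rewrite (bigD1_seq i) ?mem_enum ?enum_uniq //= pz eqxx big1_seq ?addr0; first by ring.
  by move=> j /andP[nj _]; rewrite pz (negbTE nj); ring.
rewrite e1 => /eqP; rewrite eq_sym oppr_eq0 => /eqP //.
Qed.
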